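(* Let $P:\mathbb{Z}^2\to\mathbb{R}\mathrm{P}^n$ be a Q-net and let $m<n$ be a positive integer. Generically, $\mathcal{L}_A^mP$ is Laplace degenerate if and only if for each $i\in\mathbb{Z}$ the intersection $\bigcap_{j\in\mathbb{Z}}\big(P_{i,j}\vee P_{i+1,j}\vee\cdots\vee P_{i+m,j}\big)$ is a point.
   Context: A Q-net is a map $P:\mathbb{Z}^2\to\mathbb{R}\mathrm{P}^n$ such that for all $(i,j)$ the points $P_{i,j},P_{i+1,j},P_{i+1,j+1},P_{i,j+1}$ are coplanar; $\vee$ denotes projective join. Laplace transforms: $\mathcal{L}_AP(i,j)=(P_{i,j}\vee P_{i+1,j})\cap(P_{i,j+1}\vee P_{i+1,j+1})$, $\mathcal{L}_BP(i,j)=(P_{i,j}\vee P_{i,j+1})\cap(P_{i+1,j}\vee P_{i+1,j+1})$, again Q-nets; $\mathcal{L}_A^m$ denotes the $m$-fold iterate. $\mathcal{L}_A^mP$ is Laplace degenerate if $\mathcal{L}_A^mP(i,j)$ is independent of $j$. ''Generically'' means for data in general position subject to the stated constraints. *)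

(* Defs.v *)
(* Projective space RP^n is modelled as the lattice of
   row spaces of (n+1)-column real matrices: a projective subspace is
   the row space of a square matrix A : 'M[R]_(n.+1) (compared with
   (_ == _)%MS), a point is a subspace of rank 1, join is (_ + _)%MS and
   intersection is (_ :&: _)%MS. *)
From HB Require Import structures.
From mathcomp Require Import all_boot all_order all_algebra.
From mathcomp Require Import reals.
Set Implicit Arguments. Unset Strict Implicit. Unset Printing Implicit Defensive.
Import Order.TTheory GRing.Theory Num.Theory.
Local Open Scope ring_scope.

Section QNets.
Variables (R : realType) (n : nat).
Notation sub := 'M[R]_(n.+1).

Definition net := int -> int -> sub.

(* P is a Q-net: every P i j is a point and each elementary quadrilateral
   is coplanar (its join has projective dimension <= 2, i.e. rank <= 3). *)
Definition is_qnet (P : net) : Prop :=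
  forall i j : int,
    \rank (P i j) = 1%N /\
    (\rank (P i j + P (i + 1)%R j + P (i + 1)%R (j + 1)%R + P i (j + 1)%R)%MS <= 3)%N.

Definition LA (P : net) : net :=
  fun i j => ((P i j + P (i + 1)%R j) :&: (P i (j + 1)%R + P (i + 1)%R (j + 1)%R))%MS.

Definition LAn (m : nat) (P : net) : net := iter m LA P.

Definition LA_degenerate (m : nat) (P : net) : Prop :=
  forall i j j' : int, (LAn m P i j == LAn m P i j')%MS.

Definition row_join (w : nat) (Q : net) (i j : int) : sub :=
  (\sum_(l < w.+1) Q (i + (l : nat)%:Z)%R j)%MS.

Definition meet_is_point (F : int -> sub) : Prop :=
  exists2 X : sub, \rank X = 1%N &
    forall w : 'rV[R]_(n.+1), (forall j, (w <= F j)%MS) <-> (w <= X)%MS.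

(* "Generic" position: for every k <= m,
   - the iterated Laplace transforms L_A^k P are points,
   - any m-k+1 consecutive points L_A^k P(i,j),...,L_A^k P(i+m-k,j) of a row
     span a subspace of the maximal dimension m-k,
   - k+1 consecutive m-spaces S_{i,j},...,S_{i,j+k}
     (S_{i,j} = P_{i,j} v ... v P_{i+m,j}) meet in a subspace of the
     expected dimension m-k (consecutive ones share an (m-1)-space in a
     Q-net, each further one cuts the dimension by one). *)
Definition generic_LA (m : nat) (P : net) : Prop :=
  forall k : nat, (k <= m)%N -> forall i j : int,
    [/\ \rank (LAn k P i j) = 1%N,
        \rank (row_join (m - k) (LAn k P) i j) = (m - k).+1
      & \rank (\bigcap_(l < k.+1) row_join m P i (j + (l : nat)%:Z)%R)%MS
          = (m - k).+1].

End QNets.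

(* Main.v *)
Require Import Defs.
From HB Require Import structures.
From mathcomp Require Import all_boot all_order all_algebra.
From mathcomp Require Import reals.
From mathcomp Require Import zify.
Import Order.TTheory GRing.Theory Num.Theory.
Local Open Scope ring_scope.

Section Aux.
Variables (R : realType) (n : nat).

Lemma sub_row_join (Q : net R n) (w w' : nat) (i i' j : int) :
  (forall a : 'I_w.+1, exists b : 'I_w'.+1, i + (a : nat)%:Z = i' + (b : nat)%:Z) ->
  (row_join w Q i j <= row_join w' Q i' j)%MS.
Proof.
move=> H; apply/sumsmx_subP => a _.
have [b ->] := H a.
exact: (sumsmx_sup b).
Qed.

Lemma rj_l (Q : net R n) k i j :
  (row_join k Q i j <= row_join k.+1 Q i j)%MS.
Proof.
apply: sub_row_join => a.
have lt : (a < k.+2)%N by have := ltn_ord a; lia.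
by exists (Ordinal lt).
Qed.

Lemma rj_r (Q : net R n) k i j :
  (row_join k Q (i + 1) j <= row_join k.+1 Q i j)%MS.
Proof.
apply: sub_row_join => a.
have lt : (a.+1 < k.+2)%N by have := ltn_ord a; lia.
exists (Ordinal lt) => /=; lia.
Qed.

Lemma LAn_sub (P : net R n) k : forall i j (l : nat), (l <= k)%N ->
  (LAn k P i j <= row_join k P i (j + l%:Z))%MS.
Proof.
elim: k => [|k IH] i j l hl.
  have -> : l = 0%N by lia.
  rewrite /LAn /= /row_join addr0.
  apply: (sumsmx_sup (@ord0 0)) => //=; by rewrite addr0.
rewrite /LAn iterS -/(LAn k P) /LA.
case: l hl => [|l] hl.
  apply: submx_trans (capmxSl _ _) _.
  rewrite addsmx_sub; apply/andP; split.
    exact: submx_trans (IH i j 0%N (leq0n _)) (rj_l _ _ _ _).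
  exact: submx_trans (IH (i + 1) j 0%N (leq0n _)) (rj_r _ _ _ _).
apply: submx_trans (capmxSr _ _) _.
have -> : j + l.+1%:Z = (j + 1) + l%:Z by lia.
rewrite addsmx_sub; apply/andP; split.
  exact: submx_trans (IH i (j + 1) l hl) (rj_l _ _ _ _).
exact: submx_trans (IH (i + 1) (j + 1) l hl) (rj_r _ _ _ _).
Qed.

Lemma rank_eq_sub (A B : 'M[R]_n.+1) :
  (A <= B)%MS -> \rank A = \rank B -> (B <= A)%MS.
Proof.
move=> sAB e; have [_ <-] := mxrank_leqif_sup sAB.
by rewrite e eqxx.
Qed.

End Aux.

Lemma LAn_cap {R : realType} {n m : nat} {P : net R n} i j :
  generic_LA m P ->
  (LAn m P i j == \bigcap_(l < m.+1) row_join m P i (j + (l : nat)%:Z))%MS.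
Proof.
move=> G; have [r1 _ r2] := G m (leqnn m) i j.
have s : (LAn m P i j <= \bigcap_(l < m.+1) row_join m P i (j + (l : nat)%:Z))%MS.
  apply/sub_bigcapmxP => l _; apply: LAn_sub; by have := ltn_ord l.
apply/andP; split => //; apply: rank_eq_sub s _.
by rewrite r1 r2 subnn.
Qed.

Theorem proposition2p3 (R : realType) (n m : nat) (P : net R n) :
  is_qnet P -> (0 < m)%N -> (m < n)%N -> generic_LA m P ->
  (LA_degenerate m P <->
   forall i : int, meet_is_point (fun j : int => row_join m P i j)).
Proof.
move=> _ _ _ G; split.
  move=> D i; exists (LAn m P i 0).
    by have [] := G m (leqnn m) i 0.
  move=> w; split.
    move=> H; rewrite (eqmxP (LAn_cap i 0 G)).
    apply/sub_bigcapmxP => l _; exact: H.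
  move=> H j; apply: submx_trans H _.
  rewrite (eqmxP (D i 0 j)).
  have := @LAn_sub R n P m i j 0%N (leq0n m); by rewrite addr0.
move=> H i j j'.
case: (H i) => X rX HX.
have key : forall j, (LAn m P i j == X)%MS.
  move=> k.
  have sX : (X <= LAn m P i k)%MS.
    rewrite (eqmxP (LAn_cap i k G)).
    apply/sub_bigcapmxP => l _; apply/row_subP => r.
    by apply: (proj2 (HX _)); exact: row_sub.
  have [r1 _ _] := G m (leqnn m) i k.
  apply/andP; split => //; apply: rank_eq_sub sX _; by rewrite r1 rX.
apply/eqmxP; exact: eqmx_trans (eqmxP (key j)) (eqmx_sym (eqmxP (key j'))).
Qed.
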